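(* The principle $\Diamond(\mathbb{N}^{\mathbb{N}}, =^\infty)$ implies $\mathfrak{a}_p = \aleph_1$.
   Context: For $f,g\in\mathbb{N}^{\mathbb{N}}$, $f =^\infty g$ means $\{n : f(n)=g(n)\}$ is infinite. A function $F : {}^{<\omega_1}2 \to \mathbb{N}^{\mathbb{N}}$ is Borel if for every $\delta<\omega_1$ its restriction to ${}^\delta 2$ is a Borel function. $\Diamond(\mathbb{N}^{\mathbb{N}},=^\infty)$ is the statement: for every Borel $F : {}^{<\omega_1}2\to\mathbb{N}^{\mathbb{N}}$ there is $G:\omega_1\to\mathbb{N}^{\mathbb{N}}$ such that for every $f:\omega_1\to 2$ the set $\{\delta<\omega_1 : F(f\upharpoonright\delta) =^\infty G(\delta)\}$ is stationary. A family $\mathcal{A}$ of permutations of $\mathbb{N}$ is almost disjoint if any two distinct members agree on only finitely many inputs; it is a maximal almost disjoint family of permutations if it is almost disjoint and not properly contained in another almost disjoint family of permutations. $\mathfrak{a}_p$ is the least cardinality of a maximal almost disjoint family of permutations. *)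

(* Defs.v *)
From Stdlib Require Import List.
Import ListNotations.

(* Such a structure is unique up to isomorphism. *)
Definition countable_type (X : Type) : Prop :=
  exists i : X -> nat, forall x y, i x = i y -> x = y.

Record is_omega1 (W : Type) (lt : W -> W -> Prop) : Prop := {
  om_irrefl : forall a, ~ lt a a;
  om_trans : forall a b c, lt a b -> lt b c -> lt a c;
  om_total : forall a b, lt a b \/ a = b \/ lt b a;
  om_wf : well_founded lt;
  om_uncountable : ~ countable_type W;
  om_segments_countable : forall a, countable_type {b : W | lt b a}
}.

Definition unbounded {W} (lt : W -> W -> Prop) (C : W -> Prop) : Prop :=
  forall a, exists c, C c /\ lt a c.

(* closed: every nonzero alpha with sup (C ∩ alpha) = alpha belongs to C *)
Definition closed {W} (lt : W -> W -> Prop) (C : W -> Prop) : Prop :=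
  forall a, (exists b, lt b a) ->
    (forall b, lt b a -> exists c, C c /\ lt b c /\ lt c a) -> C a.

Definition club {W} (lt : W -> W -> Prop) (C : W -> Prop) : Prop :=
  closed lt C /\ unbounded lt C.

Definition stationary {W} (lt : W -> W -> Prop) (S : W -> Prop) : Prop :=
  forall C, club lt C -> exists a, C a /\ S a.

Inductive borel {X : Type} (open : (X -> Prop) -> Prop) : (X -> Prop) -> Prop :=
  | borel_open : forall U, open U -> borel open U
  | borel_compl : forall A, borel open A -> borel open (fun x => ~ A x)
  | borel_union : forall A : nat -> X -> Prop,
      (forall n, borel open (A n)) -> borel open (fun x => exists n, A n x)
  | borel_ext : forall A B, borel open A -> (forall x, A x <-> B x) -> borel open B.

Definition open_cantor {I : Type} (U : (I -> bool) -> Prop) : Prop :=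
  forall s, U s -> exists l : list I,
    forall t, (forall i, In i l -> t i = s i) -> U t.

Definition open_baire (U : (nat -> nat) -> Prop) : Prop :=
  forall s, U s -> exists N : nat,
    forall t, (forall n, n < N -> t n = s n) -> U t.

Definition borel_fun {I : Type} (f : (I -> bool) -> (nat -> nat)) : Prop :=
  forall U, open_baire U -> borel (@open_cantor I) (fun s => U (f s)).

Definition inf_eq (f g : nat -> nat) : Prop :=
  forall N, exists n, N <= n /\ f n = g n.

(* A function F : 2^{<omega_1} -> N^N is given as a family indexed by
   delta < omega_1 of maps 2^delta -> N^N, with 2^delta = {b | b < delta} -> bool. *)
Definition diamond_Baire_infeq (W : Type) (lt : W -> W -> Prop) : Prop :=
  forall F : forall d : W, ({b : W | lt b d} -> bool) -> (nat -> nat),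
    (forall d, borel_fun (F d)) ->
    exists G : W -> (nat -> nat),
      forall f : W -> bool,
        stationary lt
          (fun d => inf_eq (F d (fun b => f (proj1_sig b))) (G d)).

Definition is_perm (p : nat -> nat) : Prop :=
  (forall x y, p x = p y -> x = y) /\ (forall y, exists x, p x = y).

Definition almost_disjoint (f g : nat -> nat) : Prop :=
  exists N, forall n, N <= n -> f n <> g n.

Definition ad_perm_family (A : (nat -> nat) -> Prop) : Prop :=
  (forall p, A p -> is_perm p) /\
  (forall p q, A p -> A q -> p <> q -> almost_disjoint p q).

Definition mad_perm_family (A : (nat -> nat) -> Prop) : Prop :=
  ad_perm_family A /\
  ~ (exists p, is_perm p /\ ~ A p /\ forall q, A q -> almost_disjoint p q).

(* a_p = aleph_1 : some MAD family of permutations has cardinality aleph_1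
   (= |W|), and every MAD family of permutations has cardinality >= aleph_1,
   i.e. is uncountable. *)
Definition a_p_eq_aleph1 (W : Type) : Prop :=
  (exists A, mad_perm_family A /\
     exists h : W -> (nat -> nat),
       (forall x y, h x = h y -> x = y) /\ (forall p, A p <-> exists w, h w = p)) /\
  (forall A, mad_perm_family A -> ~ countable_type {p : nat -> nat | A p}).

(* Main.v *)
Require Import Defs.
From Stdlib Require Import List Lia Classical ClassicalEpsilon FunctionalExtensionality PropExtensionality ProofIrrelevance Cantor.
Import ListNotations.

Lemma bor_full {I : Type} : borel (@open_cantor I) (fun _ => True).
Proof. apply borel_open. intros s _. exists nil. auto. Qed.

Lemma bor_empty {I : Type} : borel (@open_cantor I) (fun _ => False).
Proof. apply borel_open. intros s []. Qed.

Lemma bor_prop {I : Type} (P : Prop) : borel (@open_cantor I) (fun _ => P).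
Proof.
  destruct (classic P) as [H|H].
  - eapply borel_ext; [apply bor_full|]. intros; tauto.
  - eapply borel_ext; [apply bor_empty|]. intros; tauto.
Qed.

Lemma bor_Union {I : Type} (A : nat -> (I -> bool) -> Prop) :
  (forall n, borel (@open_cantor I) (A n)) -> borel (@open_cantor I) (fun x => exists n, A n x).
Proof. intros; now apply borel_union. Qed.

Lemma bor_compl {I : Type} A : borel (@open_cantor I) A -> borel (@open_cantor I) (fun x => ~ A x).
Proof. intros; now apply borel_compl. Qed.

Lemma bor_Inter {I : Type} (A : nat -> (I -> bool) -> Prop) :
  (forall n, borel (@open_cantor I) (A n)) -> borel (@open_cantor I) (fun x => forall n, A n x).
Proof.
  intros H. eapply borel_ext.
  - apply bor_compl. apply bor_Union. intro n. apply bor_compl. apply H.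
  - intro x. split.
    + intros H1 n. apply NNPP. intro H2. apply H1. eauto.
    + intros H1 [n H2]. apply H2, H1.
Qed.

Lemma bor_or {I : Type} A B : borel (@open_cantor I) A -> borel (@open_cantor I) B ->
  borel (@open_cantor I) (fun x => A x \/ B x).
Proof.
  intros HA HB. eapply borel_ext.
  - apply (bor_Union (fun n => match n with 0 => A | _ => B end)). intros [|n]; auto.
  - intro x. split.
    + intros [[|n] H]; auto.
    + intros [H|H]; [exists 0|exists 1]; auto.
Qed.

Lemma bor_and {I : Type} A B : borel (@open_cantor I) A -> borel (@open_cantor I) B ->
  borel (@open_cantor I) (fun x => A x /\ B x).
Proof.
  intros HA HB. eapply borel_ext.
  - apply bor_compl. apply (bor_or (fun x => ~ A x) (fun x => ~ B x)); apply bor_compl; auto.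
  - intro x. split.
    + cbv beta. intros H. split; apply NNPP; intro; apply H; auto.
    + cbv beta. intros [H1 H2] [H|H]; auto.
Qed.

Lemma bor_coord {I : Type} (i : I) (b : bool) : borel (@open_cantor I) (fun s => s i = b).
Proof.
  apply borel_open. intros s Hs. exists [i]. intros t Ht. rewrite Ht; simpl; auto.
Qed.

Definition Meas {I : Type} (phi : (I -> bool) -> nat) : Prop :=
  forall v, borel (@open_cantor I) (fun s => phi s = v).

Lemma meas_const {I : Type} (c : nat) : @Meas I (fun _ => c).
Proof. intro v. apply bor_prop. Qed.

Lemma meas_coord {I : Type} (i : I) : @Meas I (fun s => if s i then 1 else 0).
Proof.
  intro v. eapply borel_ext.
  - apply bor_or; apply bor_and; [apply (bor_coord i true)| apply (bor_prop (1 = v)) | apply (bor_coord i false) | apply (bor_prop (0 = v))].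
  - intro s. cbv beta. destruct (s i); split.
    + intros [[_ H]|[H _]]; congruence.
    + intros <-; left; auto.
    + intros [[H _]|[_ H]]; congruence.
    + intros <-; right; auto.
Qed.

Lemma meas_app {I : Type} (Phi : nat -> (I -> bool) -> nat) (psi : (I -> bool) -> nat) :
  (forall n, Meas (Phi n)) -> Meas psi -> Meas (fun s => Phi (psi s) s).
Proof.
  intros H1 H2 v. eapply borel_ext.
  - apply (bor_Union (fun n s => psi s = n /\ Phi n s = v)). intro n. apply (bor_and (fun s => psi s = n) (fun s => Phi n s = v)); [apply H2|apply H1].
  - intro s. split.
    + intros [n [<- H]]; auto.
    + intros H; exists (psi s); auto.
Qed.

Lemma meas_fun2 {I : Type} (g : nat -> nat -> nat) (phi psi : (I -> bool) -> nat) :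
  Meas phi -> Meas psi -> Meas (fun s => g (phi s) (psi s)).
Proof.
  intros H1 H2.
  apply (meas_app (fun a s => g a (psi s)) phi); auto.
  intro a. apply (meas_app (fun b s => g a b) psi); auto.
  intro b. apply meas_const.
Qed.

Lemma least_exists (P : nat -> Prop) : (exists n, P n) -> exists n, P n /\ forall m, m < n -> ~ P m.
Proof.
  intros [n Hn]. revert Hn. induction n as [n IH] using (well_founded_induction Wf_nat.lt_wf).
  intros Hn. destruct (classic (exists m, m < n /\ P m)) as [[m [Hm1 Hm2]]|H].
  - exact (IH m Hm1 Hm2).
  - exists n. split; auto. intros m Hm HP. apply H. eauto.
Qed.

(* least n with h n <> 0, else 0 *)
Definition mu (h : nat -> nat) : nat :=
  match excluded_middle_informative (exists n, h n <> 0) with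
  | left H => proj1_sig (constructive_indefinite_description _ (least_exists _ H))
  | right _ => 0
  end.

Lemma mu_spec1 h : (exists n, h n <> 0) -> h (mu h) <> 0 /\ forall m, m < mu h -> h m = 0.
Proof.
  intros H. unfold mu. destruct excluded_middle_informative as [H'|H']; [|contradiction].
  destruct constructive_indefinite_description as [n [Hn1 Hn2]]; simpl.
  split; auto. intros m Hm. apply NNPP. intro. eapply Hn2; eauto.
Qed.

Lemma mu_spec2 h : ~ (exists n, h n <> 0) -> mu h = 0.
Proof.
  intros H. unfold mu. destruct excluded_middle_informative as [H'|H']; [contradiction|auto].
Qed.

Lemma mu_char h v : mu h = v <-> ((h v <> 0 /\ forall m, m < v -> h m = 0) \/ (v = 0 /\ forall n, h n = 0)).
Proof.
  destruct (classic (exists n, h n <> 0)) as [H|H].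
  - destruct (mu_spec1 h H) as [A B]. split.
    + intros <-. left; auto.
    + intros [[C D]|[C D]].
      * destruct (PeanoNat.Nat.lt_trichotomy (mu h) v) as [E|[E|E]]; auto.
        -- rewrite D in A; auto. congruence.
        -- rewrite B in C; auto. congruence.
      * destruct H as [n Hn]. rewrite D in Hn. congruence.
  - rewrite (mu_spec2 h H). split.
    + intros <-. right. split; auto. intro n. apply NNPP. intro. apply H. eauto.
    + intros [[C D]|[C D]]; auto. exfalso; eauto.
Qed.

Lemma meas_mu {I : Type} (phi : nat -> (I -> bool) -> nat) :
  (forall n, Meas (phi n)) -> Meas (fun s => mu (fun n => phi n s)).
Proof.
  intros H v. eapply borel_ext.
  - apply (bor_or (fun s => phi v s <> 0 /\ forall m, m < v -> phi m s = 0)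
                  (fun s => v = 0 /\ forall n, phi n s = 0)).
    + apply (bor_and (fun s => phi v s <> 0) (fun s => forall m, m < v -> phi m s = 0)).
      * apply (bor_compl (fun s => phi v s = 0)). apply H.
      * apply (bor_Inter (fun m s => m < v -> phi m s = 0)). intro m.
        destruct (classic (m < v)).
        -- eapply borel_ext; [apply (H m 0)|]. intro; cbv beta; tauto.
        -- eapply borel_ext; [apply bor_full|]. intro; cbv beta; tauto.
    + apply (bor_and (fun s => v = 0) (fun s => forall n, phi n s = 0)).
      * apply bor_prop.
      * apply (bor_Inter (fun n s => phi n s = 0)). intro n. apply H.
  - intro s. cbv beta. rewrite mu_char. tauto.
Qed.

Lemma bor_prefix {I : Type} (F : (I -> bool) -> nat -> nat) :
  (forall k, Meas (fun s => F s k)) ->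
  forall N (Q : list nat -> Prop), borel (@open_cantor I) (fun s => Q (map (F s) (seq 0 N))).
Proof.
  intros HF N. induction N as [|N IH]; intros Q.
  - simpl. apply (bor_prop (Q nil)).
  - eapply borel_ext.
    + apply (bor_Union (fun v s => F s N = v /\ Q (map (F s) (seq 0 N) ++ [v]))).
      intro v. apply (bor_and (fun s => F s N = v) (fun s => Q (map (F s) (seq 0 N) ++ [v]))).
      * apply HF.
      * apply (IH (fun l => Q (l ++ [v]))).
    + intro s. cbv beta. rewrite seq_S, map_app. simpl. split.
      * intros [v [<- H]]. auto.
      * intros H. exists (F s N). auto.
Qed.

Lemma meas_borel_fun {I : Type} (F : (I -> bool) -> nat -> nat) :
  (forall k, Meas (fun s => F s k)) -> borel_fun F.
Proof.
  intros HF U HU. eapply borel_ext.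
  - apply (bor_Union (fun N s => (fun l => forall t, (forall n, n < N -> t n = nth n l 0) -> U t)
                                   (map (F s) (seq 0 N)))).
    intro N. apply (bor_prefix F HF N (fun l => forall t, (forall n, n < N -> t n = nth n l 0) -> U t)).
  - intro s. cbv beta. split.
    + intros [N HN]. apply HN. intros n Hn. rewrite nth_indep with (d' := F s 0).
      * rewrite map_nth, seq_nth; auto.
      * rewrite length_map, length_seq; auto.
    + intros H. destruct (HU _ H) as [N HN]. exists N. intros t Ht. apply HN.
      intros n Hn. rewrite Ht; auto. rewrite nth_indep with (d' := F s 0).
      * rewrite map_nth, seq_nth; auto.
      * rewrite length_map, length_seq; auto.
Qed.

From Stdlib Require Import List Lia Classical Cantor PeanoNat.
Import ListNotations.

Fixpoint enc (l : list (nat*nat)) : nat :=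
  match l with [] => 0 | (a,b)::l => S (to_nat (a, to_nat (b, enc l))) end.
Fixpoint decf (f : nat) (x : nat) : list (nat*nat) :=
  match f with 0 => [] | S f => match x with 0 => [] | S y =>
    let (a, z) := of_nat y in let (b, w) := of_nat z in (a,b) :: decf f w end end.
Definition dec (x : nat) := decf x x.

Lemma enc_len l : length l <= enc l.
Proof.
  induction l as [|[a b] l IH]; simpl; auto.
  pose proof (to_nat_non_decreasing b (enc l)). pose proof (to_nat_non_decreasing a (to_nat (b, enc l))). lia.
Qed.

Lemma decf_enc l f : length l <= f -> decf f (enc l) = l.
Proof.
  revert f; induction l as [|[a b] l IH]; intros f Hf.
  - destruct f; auto.
  - destruct f as [|f]; simpl in Hf; [lia|]. cbn [enc decf]. rewrite cancel_of_to. rewrite cancel_of_to. rewrite IH; auto. lia.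
Qed.

Lemma dec_enc l : dec (enc l) = l.
Proof. apply decf_enc, enc_len. Qed.

Definition mem (n : nat) (l : list nat) : bool := existsb (Nat.eqb n) l.
Lemma mem_In n l : mem n l = true <-> In n l.
Proof.
  unfold mem. rewrite existsb_exists. split.
  - intros [x [H1 H2]]. apply Nat.eqb_eq in H2. subst; auto.
  - intros H; exists n; split; auto. apply Nat.eqb_refl.
Qed.
Lemma mem_nIn n l : mem n l = false <-> ~ In n l.
Proof. rewrite <- mem_In. destruct (mem n l); split; intuition congruence. Qed.

Definition maxl (l : list nat) := fold_right max 0 l.
Lemma maxl_ge x l : In x l -> x <= maxl l.
Proof. induction l; simpl; [tauto|]. intros [H|H]; subst; try lia. specialize (IHl H). lia. Qed.
Lemma fresh_not_in l : ~ In (S (maxl l)) l.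
Proof. intro H. apply maxl_ge in H. lia. Qed.

Definition dom (P : list (nat*nat)) := map fst P.
Definition ran (P : list (nat*nat)) := map snd P.

Definition good (P : list (nat*nat)) : Prop :=
  forall a b c d, In (a,b) P -> In (c,d) P -> (a = c <-> b = d).

Lemma in_dom n m P : In (n,m) P -> In n (dom P).
Proof. intro H. apply (in_map fst) in H. exact H. Qed.
Lemma in_ran n m P : In (n,m) P -> In m (ran P).
Proof. intro H. apply (in_map snd) in H. exact H. Qed.

Lemma good_cons P n m : good P -> ~ In n (dom P) -> ~ In m (ran P) -> good ((n,m)::P).
Proof.
  intros G Hn Hm a b c d [E1|E1] [E2|E2].
  - inversion E1; inversion E2; subst; tauto.
  - inversion E1; subst. split; intro; subst; [apply in_dom in E2|apply in_ran in E2]; tauto.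
  - inversion E2; subst. split; intro; subst; [apply in_dom in E1|apply in_ran in E1]; tauto.
  - apply G; auto.
Qed.

Definition lookup (n : nat) (P : list (nat*nat)) : nat :=
  match find (fun pr => Nat.eqb (fst pr) n) P with Some pr => snd pr | None => 0 end.

Lemma lookup_spec n m P : good P -> In (n,m) P -> lookup n P = m.
Proof.
  intros G H. unfold lookup.
  destruct (find (fun pr => Nat.eqb (fst pr) n) P) as [[a b]|] eqn:E.
  - apply find_some in E. destruct E as [E1 E2]. simpl in E2. apply Nat.eqb_eq in E2. subst.
    simpl. apply (G n b n m); auto.
  - eapply find_none in E; [|exact H]. simpl in E. rewrite Nat.eqb_refl in E. discriminate.
Qed.

Definition avoidb (r : nat -> nat -> nat) (k n m : nat) : bool :=
  forallb (fun j => negb (Nat.eqb (r j n) m)) (seq 0 (S k)).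

Lemma avoidb_spec r k n m : avoidb r k n m = true <-> forall j, j <= k -> r j n <> m.
Proof.
  unfold avoidb. rewrite forallb_forall. split.
  - intros H j Hj E. specialize (H j). rewrite in_seq in H. rewrite E, Nat.eqb_refl in H.
    simpl in H. specialize (H ltac:(lia)). discriminate.
  - intros H j Hj. rewrite in_seq in Hj. destruct (Nat.eqb_spec (r j n) m); auto.
    exfalso. apply (H j); auto. lia.
Qed.

Definition okreq (r : nat -> nat -> nat) (k : nat) (P : list (nat*nat)) (c : nat*nat) : bool :=
  negb (mem (fst c) (dom P)) && negb (mem (snd c) (ran P)) && Nat.leb k (fst c) && avoidb r k (fst c) (snd c).

Lemma okreq_spec r k P n m : okreq r k P (n,m) = true <->
  ~ In n (dom P) /\ ~ In m (ran P) /\ k <= n /\ forall j, j <= k -> r j n <> m.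
Proof.
  unfold okreq; simpl. rewrite !Bool.andb_true_iff, !Bool.negb_true_iff, !mem_nIn, Nat.leb_le, avoidb_spec.
  tauto.
Qed.

Definition step1 r g k P :=
  match find (okreq r k P) (dec (g k)) with Some c => c :: P | None => P end.
Definition step2 (r : nat -> nat -> nat) k P :=
  if mem k (dom P) then P else (k, S (maxl (ran P ++ map (fun j => r j k) (seq 0 (S k))))) :: P.
Definition step3 (ri : nat -> nat -> nat) k P :=
  if mem k (ran P) then P else (S (maxl (dom P ++ map (fun j => ri j k) (seq 0 (S k)))), k) :: P.
Definition step r ri g k P := step3 ri k (step2 r k (step1 r g k P)).
Fixpoint st r ri g k := match k with 0 => [] | S k => step r ri g k (st r ri g k) end.
Definition build r ri g (n : nat) := lookup n (st r ri g (S n)).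

Definition rperm (r ri : nat -> nat -> nat) :=
  forall j, (forall x y, r j x = r j y -> x = y) /\ (forall m, r j (ri j m) = m).

Lemma step3_incl ri k P x : In x P -> In x (step3 ri k P).
Proof. unfold step3. destruct (mem _ _); simpl; auto. Qed.
Lemma step2_incl r k P x : In x P -> In x (step2 r k P).
Proof. unfold step2. destruct (mem _ _); simpl; auto. Qed.
Lemma step1_incl r g k P x : In x P -> In x (step1 r g k P).
Proof. unfold step1. destruct (find _ _); simpl; auto. Qed.
Lemma step_incl r ri g k P x : In x P -> In x (step r ri g k P).
Proof. intro. unfold step. apply step3_incl, step2_incl, step1_incl; auto. Qed.

Lemma st_mono r ri g k k' x : k <= k' -> In x (st r ri g k) -> In x (st r ri g k').
Proof.
  induction 1; auto. intro H'. simpl. apply step_incl. auto.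
Qed.

Lemma step_good r ri g k P : rperm r ri -> good P -> good (step r ri g k P).
Proof.
  intros R G. unfold step, step3, step2, step1.
  assert (G1 : good (match find (okreq r k P) (dec (g k)) with Some c => c :: P | None => P end)).
  { destruct (find _ _) as [[n m]|] eqn:E; auto. apply find_some in E. destruct E as [_ E].
    apply okreq_spec in E. apply good_cons; tauto. }
  set (P1 := match find (okreq r k P) (dec (g k)) with Some c => c :: P | None => P end) in *.
  assert (G2 : good (if mem k (dom P1) then P1 else (k, S (maxl (ran P1 ++ map (fun j => r j k) (seq 0 (S k))))) :: P1)).
  { destruct (mem k (dom P1)) eqn:E; auto. apply mem_nIn in E. apply good_cons; auto.
    intro H. apply (fresh_not_in (ran P1 ++ map (fun j => r j k) (seq 0 (S k)))). apply in_or_app; auto. }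
  set (P2 := if mem k (dom P1) then _ else _) in *.
  destruct (mem k (ran P2)) eqn:E; auto. apply mem_nIn in E. apply good_cons; auto.
  intro H. apply (fresh_not_in (dom P2 ++ map (fun j => ri j k) (seq 0 (S k)))). apply in_or_app; auto.
Qed.

Lemma st_good r ri g k : rperm r ri -> good (st r ri g k).
Proof.
  intro R. induction k; simpl.
  - intros a b c d [].
  - apply step_good; auto.
Qed.

Lemma step_dom_ran r ri g k P : In k (dom (step r ri g k P)) /\ In k (ran (step r ri g k P)).
Proof.
  unfold step, step3.
  set (P2 := step2 r k (step1 r g k P)).
  assert (In k (dom P2)).
  { unfold P2, step2. set (P1 := step1 r g k P). destruct (mem k (dom P1)) eqn:E.
    - apply mem_In; auto.
    - simpl. auto. }
  destruct (mem k (ran P2)) eqn:E.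
  - split; auto. apply mem_In; auto.
  - simpl. auto.
Qed.

Lemma step_len r ri g k P : length (step r ri g k P) <= 3 + length P.
Proof.
  unfold step, step3, step2, step1.
  destruct (find _ _); destruct (mem _ _); try destruct (mem _ _); simpl; lia.
Qed.

Lemma st_len r ri g k : length (st r ri g k) <= 3 * k.
Proof. induction k; simpl; auto. pose proof (step_len r ri g k (st r ri g k)). lia. Qed.

Lemma step_new r ri g k P n m : rperm r ri -> In (n,m) (step r ri g k P) ->
  In (n,m) P \/ forall j, j <= k -> r j n <> m.
Proof.
  intros R. unfold step, step3, step2, step1.
  set (P1 := match find (okreq r k P) (dec (g k)) with Some c => c :: P | None => P end).
  assert (H1 : In (n,m) P1 -> In (n,m) P \/ forall j, j <= k -> r j n <> m).
  { unfold P1. destruct (find _ _) as [c|] eqn:E; auto. intros [H|H]; auto. subst c.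
    apply find_some in E. destruct E as [_ E]. apply okreq_spec in E. right; tauto. }
  set (P2 := if mem k (dom P1) then _ else _).
  assert (H2 : In (n,m) P2 -> In (n,m) P \/ forall j, j <= k -> r j n <> m).
  { unfold P2. destruct (mem k (dom P1)); auto. intros [H|H]; auto. injection H as En Em. subst n m.
    right. intros j Hj E. assert (HL : In (r j k) (ran P1 ++ map (fun j => r j k) (seq 0 (S k)))).
    { apply in_or_app. right. apply in_map_iff. exists j. split; auto. apply in_seq. lia. }
    rewrite E in HL. exact (fresh_not_in _ HL). }
  destruct (mem k (ran P2)); auto. intros [H|H]; auto. injection H as En Em. subst n m.
  right. intros j Hj E.
  destruct (R j) as [Rinj Rinv].
  assert (Ex : S (maxl (dom P2 ++ map (fun j0 : nat => ri j0 k) (seq 0 (S k)))) = ri j k).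
  { apply Rinj. rewrite Rinv. exact E. }
  assert (HL : In (ri j k) (dom P2 ++ map (fun j => ri j k) (seq 0 (S k)))).
  { apply in_or_app. right. apply in_map_iff. exists j. split; auto. apply in_seq. lia. }
  rewrite <- Ex in HL. exact (fresh_not_in _ HL).
Qed.

Lemma st_avoid r ri g k n m j : rperm r ri -> In (n,m) (st r ri g k) -> r j n = m -> In (n,m) (st r ri g j).
Proof.
  intros R. induction k; simpl; [tauto|]. intros H E.
  destruct (step_new r ri g k (st r ri g k) n m R H) as [H'|H']; auto.
  destruct (Nat.le_gt_cases j k) as [Hj|Hj].
  - exfalso. apply (H' j); auto.
  - apply st_mono with (S k); [lia|]. simpl. exact H.
Qed.

Lemma build_spec r ri g k n m : rperm r ri -> In (n,m) (st r ri g k) -> build r ri g n = m.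
Proof.
  intros R H. unfold build.
  destruct (step_dom_ran r ri g n (st r ri g n)) as [D _].
  apply in_map_iff in D. destruct D as [[n' m'] [E D]]. simpl in E; subst n'.
  change (In (n, m') (st r ri g (S n))) in D.
  rewrite (lookup_spec n m' _ (st_good r ri g (S n) R) D).
  apply (st_good r ri g (max k (S n)) R n m' n m); auto.
  - apply st_mono with (S n); auto; lia.
  - apply st_mono with k; auto; lia.
Qed.

Lemma build_perm r ri g : rperm r ri -> is_perm (build r ri g).
Proof.
  intros R. split.
  - intros x y E.
    destruct (step_dom_ran r ri g x (st r ri g x)) as [Dx _].
    destruct (step_dom_ran r ri g y (st r ri g y)) as [Dy _].
    apply in_map_iff in Dx. destruct Dx as [[x' mx] [Ex Dx]]. simpl in Ex; subst x'.
    apply in_map_iff in Dy. destruct Dy as [[y' my] [Ey Dy]]. simpl in Ey; subst y'.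
    change (In (x, mx) (st r ri g (S x))) in Dx. change (In (y, my) (st r ri g (S y))) in Dy.
    rewrite (build_spec r ri g _ _ _ R Dx), (build_spec r ri g _ _ _ R Dy) in E. subst my.
    apply (st_good r ri g (max (S x) (S y)) R x mx y mx); auto.
    + apply st_mono with (S x); auto; lia.
    + apply st_mono with (S y); auto; lia.
  - intros y. destruct (step_dom_ran r ri g y (st r ri g y)) as [_ Dy].
    apply in_map_iff in Dy. destruct Dy as [[x y'] [Ey Dy]]. simpl in Ey; subst y'.
    exists x. apply (build_spec r ri g (S y)); auto.
Qed.

Lemma build_ad r ri g j : rperm r ri -> almost_disjoint (build r ri g) (r j).
Proof.
  intros R. exists (S (maxl (dom (st r ri g j)))). intros n Hn E.
  destruct (step_dom_ran r ri g n (st r ri g n)) as [D _].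
  apply in_map_iff in D. destruct D as [[n' m] [E' D]]. simpl in E'; subst n'.
  change (In (n, m) (st r ri g (S n))) in D.
  rewrite (build_spec r ri g _ _ _ R D) in E.
  symmetry in E. apply (st_avoid r ri g _ _ _ j R D) in E. apply in_dom, maxl_ge in E. lia.
Qed.

Lemma build_meet r ri g k : rperm r ri ->
  (exists c, In c (dec (g k)) /\ okreq r k (st r ri g k) c = true) ->
  exists n, k <= n /\ In (n, build r ri g n) (dec (g k)).
Proof.
  intros R [c [Hc1 Hc2]].
  destruct (find (okreq r k (st r ri g k)) (dec (g k))) as [[n m]|] eqn:E.
  - apply find_some in E as E'. destruct E' as [E1 E2]. apply okreq_spec in E2.
    exists n. split; [tauto|].
    assert (In (n,m) (st r ri g (S k))).
    { simpl. unfold step. apply step3_incl, step2_incl. unfold step1. rewrite E. simpl; auto. }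
    rewrite (build_spec r ri g _ _ _ R H). auto.
  - eapply find_none in E; [|exact Hc1]. congruence.
Qed.

Lemma meet_exists r k P (q : nat -> nat) (qi : nat -> nat) (cs : list (nat*nat)) :
  (forall x, qi (q x) = x) ->
  (forall c, In c cs -> snd c = q (fst c) /\ k <= fst c /\ forall j, j <= k -> r j (fst c) <> q (fst c)) ->
  NoDup (map fst cs) -> 2 * length P < length cs ->
  exists c, In c cs /\ okreq r k P c = true.
Proof.
  intros Hqi Hcs ND Hlen. apply NNPP. intro H.
  assert (incl (map fst cs) (dom P ++ map qi (ran P))).
  { intros x Hx. apply in_map_iff in Hx. destruct Hx as [[a b] [Ea Hc]]. simpl in Ea; subst x.
    destruct (Hcs _ Hc) as [Eb [Hk Hav]]. simpl in *. subst b.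
    destruct (classic (In a (dom P))) as [D|D]; [apply in_or_app; auto|].
    destruct (classic (In (q a) (ran P))) as [D'|D'].
    - apply in_or_app. right. rewrite <- (Hqi a). apply in_map; auto.
    - exfalso. apply H. exists (a, q a). split; auto. apply okreq_spec. tauto. }
  apply NoDup_incl_length in H0; auto. rewrite length_app, !length_map in H0.
  unfold dom, ran in H0. rewrite !length_map in H0. lia.
Qed.

From Stdlib Require Import List Lia Classical ClassicalEpsilon FunctionalExtensionality Cantor PeanoNat.
Import ListNotations.

Section Om.
Variable W : Type.
Variable lt : W -> W -> Prop.
Hypothesis HW : is_omega1 W lt.

Lemma W_inh : exists w : W, True.
Proof.
  apply NNPP. intro H. apply (om_uncountable _ _ HW).
  exists (fun w => match H (ex_intro _ w I) with end). intros x. destruct (H (ex_intro _ x I)).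
Qed.

Definition w0 : W := proj1_sig (constructive_indefinite_description _ W_inh).

Lemma minimal (P : W -> Prop) : (exists w, P w) -> exists w, P w /\ forall y, lt y w -> ~ P y.
Proof.
  intros [w Hw]. revert Hw. induction w as [w IH] using (well_founded_induction (om_wf _ _ HW)).
  intros Hw. destruct (classic (exists y, lt y w /\ P y)) as [[y [Hy1 Hy2]]|Hn].
  - exact (IH y Hy1 Hy2).
  - exists w. split; auto. intros y Hy HP. apply Hn. eauto.
Qed.

Lemma seg_inj (d : W) : { i : {b | lt b d} -> nat | forall x y, i x = i y -> x = y }.
Proof. apply constructive_indefinite_description. apply (om_segments_countable _ _ HW). Defined.

Definition enum (d : W) (j : nat) : option {b | lt b d} :=
  match excluded_middle_informative (exists x, proj1_sig (seg_inj d) x = j) with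
  | left H => Some (proj1_sig (constructive_indefinite_description _ H))
  | right _ => None
  end.

Lemma enum_spec (d b : W) : lt b d -> exists j h, enum d j = Some (exist _ b h).
Proof.
  intros h. exists (proj1_sig (seg_inj d) (exist _ b h)), h. unfold enum.
  destruct excluded_middle_informative as [E|E].
  - f_equal. destruct constructive_indefinite_description as [x Hx]. simpl.
    apply (proj2_sig (seg_inj d)). exact Hx.
  - exfalso. apply E. eauto.
Qed.

Lemma countable_ub (x : nat -> W) : exists u, forall j, lt (x j) u.
Proof.
  apply NNPP. intros H.
  assert (H1 : forall w, exists j, lt w (x j) \/ w = x j).
  { intro w. apply NNPP. intro H2. apply H. exists w. intro j.
    destruct (om_total _ _ HW (x j) w) as [E|[E|E]]; auto; exfalso; apply H2; eauto. }
  apply (om_uncountable _ _ HW).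
  destruct (choice _ H1) as [jf Hjf].
  exists (fun w => to_nat (jf w, match excluded_middle_informative (lt w (x (jf w))) with
            | left h => S (proj1_sig (seg_inj (x (jf w))) (exist _ w h)) | right _ => 0 end)).
  intros a b E. apply (f_equal of_nat) in E. rewrite !cancel_of_to in E. injection E as E1 E2.
  destruct excluded_middle_informative as [ha|ha]; destruct excluded_middle_informative as [hb|hb];
    try discriminate.
  - injection E2 as E2. revert hb E2. rewrite <- E1. intros hb E2.
    apply (proj2_sig (seg_inj (x (jf a)))) in E2. injection E2; auto.
  - destruct (Hjf a) as [Ha|Ha]; [contradiction|]. destruct (Hjf b) as [Hb|Hb]; [contradiction|].
    rewrite Ha, Hb, E1. auto.
Qed.

Definition ub (x : nat -> W) : W := proj1_sig (constructive_indefinite_description _ (countable_ub x)).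
Lemma ub_spec x j : lt (x j) (ub x).
Proof. unfold ub. destruct constructive_indefinite_description as [u Hu]. simpl. auto. Qed.

Definition succ (w : W) : W := ub (fun _ => w).
Lemma succ_spec w : lt w (succ w).
Proof. apply (ub_spec (fun _ => w) 0). Qed.

Definition wrec {X : Type} (Phi : forall a, (forall b, lt b a -> X) -> X) : W -> X :=
  Fix (om_wf _ _ HW) (fun _ => X) Phi.

Lemma wrec_eq {X : Type} (Phi : forall a, (forall b, lt b a -> X) -> X) a :
  wrec Phi a = Phi a (fun b _ => wrec Phi b).
Proof.
  unfold wrec. rewrite Fix_eq; auto.
  intros x f g Hfg. f_equal. apply functional_extensionality_dep. intro y.
  apply functional_extensionality_dep. intro p. apply Hfg.
Qed.

Definition ePhi (a : W) (rec : forall b, lt b a -> nat -> W) : nat -> W :=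
  fun i => Nat.iter i succ (ub (fun n => let (x, j) := of_nat n in
     match enum a x with Some b => rec (proj1_sig b) (proj2_sig b) j | None => w0 end)).

Definition e : W -> nat -> W := wrec ePhi.

Lemma iter_lt x i j : i < j -> lt (Nat.iter i succ x) (Nat.iter j succ x).
Proof.
  induction 1.
  - simpl. apply succ_spec.
  - simpl. eapply (om_trans _ _ HW); eauto. apply succ_spec.
Qed.

Lemma iter_le x i : Nat.iter i succ x = x \/ lt x (Nat.iter i succ x).
Proof. destruct i; auto. right. apply (iter_lt x 0). lia. Qed.

Lemma e_below a b j i : lt b a -> lt (e b j) (e a i).
Proof.
  intros h. unfold e at 2. rewrite wrec_eq. unfold ePhi.
  destruct (enum_spec a b h) as [x [h' Ex]].
  match goal with |- lt _ (Nat.iter i succ (ub ?F)) =>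
    pose proof (ub_spec F (to_nat (x, j))) as U; set (u := ub F) in * end.
  cbv beta in U. rewrite cancel_of_to, Ex in U. simpl in U.
  destruct (iter_le u i) as [E|E]; rewrite ?E; auto. eapply (om_trans _ _ HW); eauto.
Qed.

Lemma iter_inj x i j : Nat.iter i succ x = Nat.iter j succ x -> i = j.
Proof.
  intros E. destruct (Nat.lt_trichotomy i j) as [L|[L|L]]; auto; exfalso;
    [apply (iter_lt x i j) in L|apply (iter_lt x j i) in L]; rewrite E in L; eapply (om_irrefl _ _ HW); eauto.
Qed.

Lemma e_inj a b i j : e a i = e b j -> a = b /\ i = j.
Proof.
  intros E. destruct (om_total _ _ HW a b) as [h|[h|h]].
  - exfalso. apply (om_irrefl _ _ HW (e a i)). rewrite E at 2. apply e_below; auto.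
  - subst. split; auto. unfold e in E. rewrite wrec_eq in E. unfold ePhi in E.
    eapply iter_inj; eauto.
  - exfalso. apply (om_irrefl _ _ HW (e a i)). rewrite E at 1. apply e_below; auto.
Qed.

Definition Cl (d : W) : Prop := lt w0 d /\ forall a i, lt a d -> lt (e a i) d.

Definition nxt (a : W) : W := ub (fun n => match n with 0 => a | 1 => w0 | S (S n') =>
  let (x, i) := of_nat n' in match x with 0 => e a i | S x' =>
    match enum a x' with Some b => e (proj1_sig b) i | None => w0 end end end).

Lemma nxt_spec a : lt a (nxt a) /\ lt w0 (nxt a) /\ forall b i, (lt b a \/ b = a) -> lt (e b i) (nxt a).
Proof.
  unfold nxt.
  match goal with |- context [ub ?F] => set (G := F); pose proof (ub_spec G) as U end.
  split; [apply (U 0)|split; [apply (U 1)|]].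
  intros b i [h| ->].
  - destruct (enum_spec a b h) as [x [h' Ex]]. specialize (U (S (S (to_nat (S x, i))))).
    unfold G in U. rewrite cancel_of_to, Ex in U. exact U.
  - specialize (U (S (S (to_nat (0, i))))). unfold G in U. rewrite cancel_of_to in U. exact U.
Qed.

Lemma Cl_club : club lt Cl.
Proof.
  split.
  - intros a [b0 hb0] H. split.
    + destruct (H b0 hb0) as [c [[Hc _] [_ Hca]]]. eapply (om_trans _ _ HW); eauto.
    + intros x i hx. destruct (H x hx) as [c [[_ Hc] [Hxc Hca]]]. eapply (om_trans _ _ HW); eauto.
  - intros a. set (A := fun j => Nat.iter j nxt a).
    destruct (minimal (fun u => forall j, lt (A j) u) (countable_ub A)) as [d [Hd1 Hd2]].
    exists d. split; [split|].
    + eapply (om_trans _ _ HW); [apply (nxt_spec a)|]. apply (Hd1 1).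
    + intros x i hx. assert (exists j, ~ lt (A j) x) as [j Hj].
      { apply NNPP. intro Hn. apply (Hd2 x hx). intro j. apply NNPP. intro. apply Hn. eauto. }
      assert (lt x (A j) \/ x = A j).
      { destruct (om_total _ _ HW x (A j)) as [E|[E|E]]; auto; contradiction. }
      eapply (om_trans _ _ HW); [apply (nxt_spec (A j)); auto|]. apply (Hd1 (S j)).
    + apply (Hd1 0).
Qed.
End Om.

From Stdlib Require Import List Lia Classical ClassicalEpsilon FunctionalExtensionality Cantor PeanoNat.
Import ListNotations.

Lemma meas_ext {I : Type} (phi psi : (I -> bool) -> nat) : Meas phi -> (forall s, phi s = psi s) -> Meas psi.
Proof. intros H E v. eapply borel_ext; [apply (H v)|]. intro s. cbv beta. rewrite E. tauto. Qed.

Lemma meas_forallb {I : Type} (b : nat -> (I -> bool) -> bool) :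
  (forall j, Meas (fun s => if b j s then 1 else 0)) ->
  forall L, Meas (fun s => if forallb (fun j => b j s) L then 1 else 0).
Proof.
  intros H L. induction L as [|x L IH]; simpl.
  - apply meas_const.
  - apply (meas_ext (fun s => (if b x s then 1 else 0) * (if forallb (fun j => b j s) L then 1 else 0))).
    + apply (meas_fun2 Nat.mul); auto.
    + intro s. destruct (b x s), (forallb _ _); auto.
Qed.

Lemma meas_enc {I : Type} (a b : nat -> (I -> bool) -> nat) :
  (forall i, Meas (a i)) -> (forall i, Meas (b i)) ->
  forall L, Meas (fun s => enc (map (fun i => (a i s, b i s)) L)).
Proof.
  intros Ha Hb L. induction L as [|x L IH]; simpl.
  - apply meas_const.
  - apply (meas_fun2 (fun u v => S (to_nat (u, v)))); auto.
    apply (meas_fun2 (fun u v => to_nat (u, v))); auto.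
Qed.

Definition inv (f : nat -> nat) (m : nat) : nat :=
  match excluded_middle_informative (exists x, f x = m) with
  | left H => proj1_sig (constructive_indefinite_description _ H) | right _ => 0 end.

Lemma inv_spec f m : (exists x, f x = m) -> f (inv f m) = m.
Proof.
  intros H. unfold inv. destruct excluded_middle_informative; [|contradiction].
  destruct constructive_indefinite_description; auto.
Qed.

Lemma inv_l f x : (forall a b, f a = f b -> a = b) -> inv f (f x) = x.
Proof. intros Hi. apply Hi. apply inv_spec. eauto. Qed.

Lemma ad_sym f g : almost_disjoint f g -> almost_disjoint g f.
Proof. intros [N H]. exists N. intros n Hn E. apply (H n Hn). auto. Qed.

Lemma ad_irrefl f : ~ almost_disjoint f f.
Proof. intros [N H]. apply (H N); auto. Qed.

Lemma is_perm_id : is_perm (fun n => n).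
Proof. split; eauto. Qed.

Lemma rperm_of (r : nat -> nat -> nat) : (forall j, is_perm (r j)) -> rperm r (fun j => inv (r j)).
Proof.
  intros H j. destruct (H j) as [Hi Hs]. split; auto. intro m. apply inv_spec. apply Hs.
Qed.

Lemma part2 (A : (nat -> nat) -> Prop) : mad_perm_family A -> ~ countable_type {p | A p}.
Proof.
  intros [[Hperm Had] Hmax] [i Hi].
  set (r := fun j => match excluded_middle_informative (exists x, i x = j) with
            | left H => proj1_sig (proj1_sig (constructive_indefinite_description _ H))
            | right _ => fun n => n end).
  assert (Rp : forall j, is_perm (r j)).
  { intro j. unfold r. destruct excluded_middle_informative as [H|H].
    - destruct constructive_indefinite_description as [[x hx] E]. simpl. auto.
    - apply is_perm_id. }
  assert (RA : forall q (h : A q), r (i (exist _ q h)) = q).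
  { intros q h. unfold r. destruct excluded_middle_informative as [H|H].
    - destruct constructive_indefinite_description as [x E]. simpl. apply Hi in E. subst x. auto.
    - exfalso. eauto. }
  set (p := build r (fun j => inv (r j)) (fun _ => 0)).
  apply Hmax. exists p. split; [|split].
  - apply build_perm, rperm_of, Rp.
  - intro Ap. pose proof (build_ad r (fun j => inv (r j)) (fun _ => 0) (i (exist _ p Ap)) (rperm_of r Rp)) as H.
    fold p in H. rewrite RA in H. exact (ad_irrefl p H).
  - intros q Aq. rewrite <- (RA q Aq). apply build_ad, rperm_of, Rp.
Qed.

From Stdlib Require Import List Lia Classical ClassicalEpsilon FunctionalExtensionality Cantor PeanoNat.
Import ListNotations.

Section Main.
Variable W : Type.
Variable lt : W -> W -> Prop.
Hypothesis HW : is_omega1 W lt.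

Notation ww0 := (w0 W lt HW).
Notation ee := (e W lt HW).
Notation en := (enum W lt HW).

Definition firstpred (d : W) : option {b | lt b d} :=
  match excluded_middle_informative (exists b, lt b d) with
  | left H => let b := constructive_indefinite_description _ H in Some (exist _ (proj1_sig b) (proj2_sig b))
  | right _ => None end.

Definition pick (d : W) (j : nat) : option {b | lt b d} :=
  match en d j with Some b => Some b | None => firstpred d end.

Lemma pick_all d b : lt b d -> exists j h, pick d j = Some (exist _ b h).
Proof. intros h. destruct (enum_spec W lt HW d b h) as [j [h' E]]. exists j, h'. unfold pick. rewrite E. auto. Qed.

Lemma pick_some d : (exists b, lt b d) -> forall j, exists b, pick d j = Some b.
Proof.
  intros H j. unfold pick. destruct (en d j); eauto. unfold firstpred.
  destruct excluded_middle_informative; [eauto|contradiction].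
Qed.

Definition rd (d : W) (s : {b | lt b d} -> bool) (x : W) : nat :=
  match excluded_middle_informative (lt x d) with
  | left h => if s (exist _ x h) then 1 else 0 | right _ => 0 end.

Definition qdec d s n := mu (fun m => rd d s (ee ww0 (S (2 * to_nat (n, m))))).
Definition rdec d s j n := match pick d j with
  | Some b => mu (fun m => rd d s (ee (proj1_sig b) (2 * to_nat (n, m)))) | None => n end.
Definition avb d s k n : bool := forallb (fun j => negb (Nat.eqb (qdec d s n) (rdec d s j n))) (seq 0 (S k)).
Definition av d s k n : nat := if avb d s k n then 1 else 0.
Fixpoint cseq d s k i : nat := match i with
  | 0 => mu (fun n => if Nat.leb k n then av d s k n else 0)
  | S i => mu (fun n => if Nat.ltb (cseq d s k i) n then av d s k n else 0) end.
Definition Fdef d s k := enc (map (fun i => (cseq d s k i, qdec d s (cseq d s k i))) (seq 0 (S (6 * k)))).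

Lemma rd_meas d x : Meas (fun s => rd d s x).
Proof.
  unfold rd. destruct excluded_middle_informative as [h|h].
  - apply meas_coord.
  - apply meas_const.
Qed.

Lemma qdec_meas d n : Meas (fun s => qdec d s n).
Proof. unfold qdec. apply (meas_mu (fun m s => rd d s _)). intro; apply rd_meas. Qed.

Lemma rdec_meas d j n : Meas (fun s => rdec d s j n).
Proof.
  unfold rdec. destruct (pick d j).
  - apply (meas_mu (fun m s => rd d s _)). intro; apply rd_meas.
  - apply meas_const.
Qed.

Lemma av_meas d k n : Meas (fun s => av d s k n).
Proof.
  unfold av, avb. apply (meas_forallb (fun j s => negb (Nat.eqb (qdec d s n) (rdec d s j n)))).
  intro j. apply (meas_ext (fun s => (fun a c => if Nat.eqb a c then 0 else 1) (qdec d s n) (rdec d s j n))).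
  - apply (meas_fun2 (fun a c => if Nat.eqb a c then 0 else 1) (fun s => qdec d s n) (fun s => rdec d s j n)); [apply qdec_meas|apply rdec_meas].
  - intro s. destruct (Nat.eqb _ _); auto.
Qed.

Lemma cseq_meas d k i : Meas (fun s => cseq d s k i).
Proof.
  induction i as [|i IH]; simpl.
  - apply (meas_mu (fun n s => if Nat.leb k n then av d s k n else 0)). intro n.
    destruct (Nat.leb k n); [apply av_meas|apply meas_const].
  - apply (meas_app (fun a s => mu (fun n => if Nat.ltb a n then av d s k n else 0)) (fun s => cseq d s k i)); auto.
    intro a. apply (meas_mu (fun n s => if Nat.ltb a n then av d s k n else 0)). intro n.
    destruct (Nat.ltb a n); [apply av_meas|apply meas_const].
Qed.

Lemma Fdef_borel d : borel_fun (fun s => Fdef d s).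
Proof.
  apply meas_borel_fun. intro k. unfold Fdef.
  apply (meas_enc (fun i s => cseq d s k i) (fun i s => qdec d s (cseq d s k i))).
  - intro i. apply cseq_meas.
  - intro i. apply (meas_app (fun n s => qdec d s n) (fun s => cseq d s k i)); [intro; apply qdec_meas|apply cseq_meas].
Qed.


Hypothesis HD : diamond_Baire_infeq W lt.

Lemma G_ex : exists G : W -> nat -> nat, forall f : W -> bool,
  stationary lt (fun d => inf_eq (Fdef d (fun b => f (proj1_sig b))) (G d)).
Proof. apply (HD (fun d s => Fdef d s)). apply Fdef_borel. Qed.

Definition GG : W -> nat -> nat := proj1_sig (constructive_indefinite_description _ G_ex).
Lemma GG_spec f : stationary lt (fun d => inf_eq (Fdef d (fun b => f (proj1_sig b))) (GG d)).
Proof. unfold GG. destruct constructive_indefinite_description; simpl; auto. Qed.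

Definition rr_of (d : W) (rec : forall b, lt b d -> nat -> nat) (j : nat) : nat -> nat :=
  match pick d j with Some b => rec (proj1_sig b) (proj2_sig b) | None => fun n => n end.
Definition ppPhi (d : W) (rec : forall b, lt b d -> nat -> nat) : nat -> nat :=
  build (rr_of d rec) (fun j => inv (rr_of d rec j)) (GG d).
Definition pp : W -> nat -> nat := wrec W lt HW ppPhi.
Definition rr (d : W) (j : nat) : nat -> nat :=
  match pick d j with Some b => pp (proj1_sig b) | None => fun n => n end.

Lemma pp_eq d : pp d = build (rr d) (fun j => inv (rr d j)) (GG d).
Proof. unfold pp at 1. rewrite wrec_eq. reflexivity. Qed.

Lemma pp_perm_all : forall d, is_perm (pp d) /\ forall j, is_perm (rr d j).
Proof.
  intro d. induction d as [d IH] using (well_founded_induction (om_wf _ _ HW)).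
  assert (R : forall j, is_perm (rr d j)).
  { intro j. unfold rr. destruct (pick d j) as [[b h]|]; simpl.
    - apply (IH b h).
    - apply is_perm_id. }
  split; auto. rewrite pp_eq. apply build_perm, rperm_of, R.
Qed.

Lemma pp_perm d : is_perm (pp d).
Proof. apply pp_perm_all. Qed.

Lemma pp_ad d b : lt b d -> almost_disjoint (pp d) (pp b).
Proof.
  intros h. destruct (pick_all d b h) as [j [h' E]].
  assert (rr d j = pp b) as <-. { unfold rr. rewrite E. auto. }
  rewrite pp_eq. apply build_ad, rperm_of. apply pp_perm_all.
Qed.

Lemma pp_inj a b : pp a = pp b -> a = b.
Proof.
  intros E. destruct (om_total _ _ HW a b) as [h|[h|h]]; auto; exfalso.
  - pose proof (pp_ad b a h) as H. rewrite E in H. exact (ad_irrefl _ H).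
  - pose proof (pp_ad a b h) as H. rewrite E in H. exact (ad_irrefl _ H).
Qed.

Lemma mu_point g : mu (fun m => if Nat.eqb g m then 1 else 0) = g.
Proof.
  apply mu_char. left. split.
  - rewrite Nat.eqb_refl. auto.
  - intros m Hm. destruct (Nat.eqb_spec g m); [lia|auto].
Qed.

Lemma inj_NoDup (f : nat -> nat) l : (forall a b, f a = f b -> a = b) -> NoDup l -> NoDup (map f l).
Proof.
  intros Hf H. induction H; simpl; constructor; auto.
  intro Hx. apply in_map_iff in Hx. destruct Hx as [y [Ey Hy]]. apply Hf in Ey. subst; auto.
Qed.


Section Max.
Variable q : nat -> nat.
Hypothesis Hq : is_perm q.
Hypothesis HA : forall w, almost_disjoint q (pp w).

Definition fcode (x : W) : bool :=
  if excluded_middle_informative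
     ((exists a n m, x = ee a (2 * to_nat (n, m)) /\ pp a n = m) \/
      (exists n m, x = ee ww0 (S (2 * to_nat (n, m))) /\ q n = m)) then true else false.

Lemma fcode_p a n m : fcode (ee a (2 * to_nat (n, m))) = true <-> pp a n = m.
Proof.
  unfold fcode. destruct excluded_middle_informative as [H|H]; split; intro E; try discriminate; auto.
  - destruct H as [[a' [n' [m' [E1 E2]]]]|[n' [m' [E1 _]]]].
    + apply e_inj in E1. destruct E1 as [-> E1].
      assert (to_nat (n, m) = to_nat (n', m')) by lia.
      apply (f_equal of_nat) in H. rewrite !cancel_of_to in H. injection H as -> ->. auto.
    + apply e_inj in E1. lia.
  - exfalso. apply H. left. eauto.
Qed.

Lemma fcode_q n m : fcode (ee ww0 (S (2 * to_nat (n, m)))) = true <-> q n = m.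
Proof.
  unfold fcode. destruct excluded_middle_informative as [H|H]; split; intro E; try discriminate; auto.
  - destruct H as [[a' [n' [m' [E1 _]]]]|[n' [m' [E1 E2]]]].
    + apply e_inj in E1. lia.
    + apply e_inj in E1. destruct E1 as [_ E1].
      assert (to_nat (n, m) = to_nat (n', m')) by lia.
      apply (f_equal of_nat) in H. rewrite !cancel_of_to in H. injection H as -> ->. auto.
  - exfalso. apply H. right. eauto.
Qed.

Lemma contradiction_max : False.
Proof.
  set (fs := fun d (b : {b | lt b d}) => fcode (proj1_sig b)).
  destruct (GG_spec fcode (Cl W lt HW) (Cl_club W lt HW)) as [d [[Hw0 Hcl] Hinf]].
  fold (fs d) in Hinf.
  assert (Hrd : forall x, lt x d -> rd d (fs d) x = if fcode x then 1 else 0).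
  { intros x hx. unfold rd. destruct excluded_middle_informative; [auto|contradiction]. }
  assert (Hqd : forall n, qdec d (fs d) n = q n).
  { intro n. unfold qdec. rewrite <- (mu_point (q n)). f_equal. apply functional_extensionality. intro m.
    rewrite Hrd; [|apply Hcl; auto]. destruct (fcode _) eqn:E; destruct (Nat.eqb_spec (q n) m) as [Em|Em]; auto.
    - apply fcode_q in E. contradiction.
    - apply fcode_q in Em. congruence. }
  assert (Hrdec : forall j n, rdec d (fs d) j n = rr d j n).
  { intros j n. unfold rdec, rr. destruct (pick_some d (ex_intro _ _ Hw0) j) as [[b h] E]. rewrite E. cbn [proj1_sig].
    rewrite <- (mu_point (pp b n)). f_equal. apply functional_extensionality. intro m.
    rewrite Hrd; [|apply Hcl; auto]. destruct (fcode _) eqn:E'; destruct (Nat.eqb_spec (pp b n) m) as [Em|Em]; auto.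
    - apply fcode_p in E'. contradiction.
    - apply fcode_p in Em. congruence. }
  assert (Hav : forall k n, av d (fs d) k n = 1 <-> forall j, j <= k -> q n <> rr d j n).
  { intros k n. unfold av, avb. destruct (forallb _ _) eqn:E; split; intro H; auto; try discriminate.
    - rewrite forallb_forall in E. intros j Hj E'. specialize (E j). rewrite in_seq in E.
      rewrite Hqd, Hrdec, E', Nat.eqb_refl in E. specialize (E ltac:(lia)). discriminate.
    - exfalso. apply Bool.not_true_iff_false in E. apply E. apply forallb_forall. intros j Hj.
      rewrite in_seq in Hj. rewrite Hqd, Hrdec. destruct (Nat.eqb_spec (q n) (rr d j n)); auto.
      exfalso. apply (H j); auto. lia. }
  assert (Hrr : forall j, exists b, rr d j = pp b).
  { intro j. unfold rr. destruct (pick_some d (ex_intro _ _ Hw0) j) as [[b h] E]. rewrite E. eauto. }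
  assert (HN : forall k, exists N, forall n, N <= n -> forall j, j <= k -> q n <> rr d j n).
  { induction k as [|k [N IH]].
    - destruct (Hrr 0) as [b Eb]. destruct (HA b) as [N HN]. exists N. intros n Hn j Hj.
      assert (j = 0) as -> by lia. rewrite Eb. auto.
    - destruct (Hrr (S k)) as [b Eb]. destruct (HA b) as [N' HN]. exists (max N N').
      intros n Hn j Hj. destruct (Nat.eq_dec j (S k)) as [->|Hne].
      + rewrite Eb. apply HN. lia.
      + apply IH; lia. }
  assert (Hc : forall k i, av d (fs d) k (cseq d (fs d) k i) = 1 /\ k <= cseq d (fs d) k i /\
                 cseq d (fs d) k i < cseq d (fs d) k (S i)).
  { intros k. destruct (HN k) as [N HNk].
    assert (Hstep : forall a, mu (fun n => if Nat.ltb a n then av d (fs d) k n else 0) > a /\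
                      av d (fs d) k (mu (fun n => if Nat.ltb a n then av d (fs d) k n else 0)) = 1).
    { intro a. destruct (mu_spec1 (fun n => if Nat.ltb a n then av d (fs d) k n else 0)) as [H1 _].
      - exists (max (S a) N). replace (Nat.ltb a (max (S a) N)) with true by (symmetry; apply Nat.ltb_lt; lia).
        replace (av d (fs d) k (max (S a) N)) with 1; auto. symmetry. apply Hav. apply HNk. lia.
      - destruct (Nat.ltb_spec a (mu (fun n => if Nat.ltb a n then av d (fs d) k n else 0))); [|congruence].
        split; auto. destruct (av _ _ _ _) eqn:E; [congruence|]. unfold av in E.
        destruct (avb _ _ _ _); [auto|discriminate]. }
    assert (H0 : av d (fs d) k (cseq d (fs d) k 0) = 1 /\ k <= cseq d (fs d) k 0).
    { simpl. destruct (mu_spec1 (fun n => if Nat.leb k n then av d (fs d) k n else 0)) as [H1 _].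
      - exists (max k N). replace (Nat.leb k (max k N)) with true by (symmetry; apply Nat.leb_le; lia).
        replace (av d (fs d) k (max k N)) with 1; auto. symmetry. apply Hav. apply HNk. lia.
      - destruct (Nat.leb_spec k (mu (fun n => if Nat.leb k n then av d (fs d) k n else 0))); [|congruence].
        split; auto. destruct (av _ _ _ _) eqn:E; [congruence|]. unfold av in E.
        destruct (avb _ _ _ _); [auto|discriminate]. }
    induction i as [|i IH].
    - split; [tauto|split; [tauto|]]. simpl cseq at 2. apply (Hstep _).
    - destruct IH as [IH1 [IH2 IH3]]. pose proof (Hstep (cseq d (fs d) k i)) as [S1 S2].
      pose proof (Hstep (cseq d (fs d) k (S i))) as [S3 S4].
      split; [exact S2|split; [simpl in *; lia|exact S3]]. }
  destruct (HA d) as [N0 HN0].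
  destruct (Hinf N0) as [k [Hk Ek]].
  set (c := fun i => cseq d (fs d) k i).
  assert (Cinc : forall i i', i < i' -> c i < c i').
  { intros i i' H. induction H.
    - apply (Hc k i).
    - pose proof (Hc k m) as [_ [_ X]]. unfold c in *. lia. }
  set (cs := map (fun i => (c i, q (c i))) (seq 0 (S (6*k)))).
  assert (EF : Fdef d (fs d) k = enc cs).
  { unfold Fdef, cs. f_equal. apply map_ext. intro i. rewrite Hqd. auto. }
  assert (Dk : dec (GG d k) = cs). { rewrite <- Ek, EF. apply dec_enc. }
  destruct (build_meet (rr d) (fun j => inv (rr d j)) (GG d) k (rperm_of _ (proj2 (pp_perm_all d)))) as [n [Hn Hin]].
  { rewrite Dk. apply meet_exists with (q := q) (qi := inv q).
    - intro x. apply inv_l. apply Hq.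
    - intros [a b] Hc'. unfold cs in Hc'. apply in_map_iff in Hc'. destruct Hc' as [i [Ei Hi]].
      injection Ei as <- <-. cbn [fst snd].
      destruct (Hc k i) as [A1 [A2 _]]. split; auto. split; auto.
      intros j Hj E. apply (proj1 (Hav k _) A1 j Hj). auto.
    - unfold cs. rewrite map_map. cbn [fst]. apply inj_NoDup; [|apply seq_NoDup].
      intros a b E. destruct (Nat.lt_trichotomy a b) as [L|[L|L]]; auto; apply Cinc in L; lia.
    - unfold cs. rewrite length_map, length_seq. pose proof (st_len (rr d) (fun j => inv (rr d j)) (GG d) k). lia. }
  rewrite Dk in Hin. unfold cs in Hin. apply in_map_iff in Hin. destruct Hin as [i [Ei _]].
  injection Ei as E1 E2. rewrite <- pp_eq in E2. rewrite <- E1 in E2.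
  apply (HN0 (c i)); [|auto]. pose proof (Hc k i). unfold c in *. lia.
Qed.
End Max.

Lemma part1 : exists A, mad_perm_family A /\
     exists h : W -> (nat -> nat),
       (forall x y, h x = h y -> x = y) /\ (forall p, A p <-> exists w, h w = p).
Proof.
  exists (fun p => exists w, pp w = p). split.
  - split; [split|].
    + intros p [w <-]. apply pp_perm.
    + intros p1 p2 [a <-] [b <-] Hne. destruct (om_total _ _ HW a b) as [h|[h|h]].
      * apply ad_sym, pp_ad; auto.
      * subst; contradiction.
      * apply pp_ad; auto.
    + intros [q [Hq [HnA Hq2]]]. apply (contradiction_max q Hq). intro w. apply Hq2. eauto.
  - exists pp. split; [apply pp_inj|]. tauto.
Qed.

End Main.

Theorem mainTheorem15 (W : Type) (lt : W -> W -> Prop) :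
  is_omega1 W lt ->
  diamond_Baire_infeq W lt ->
  a_p_eq_aleph1 W.
Proof.
  intros HW HD. split.
  - exact (part1 W lt HW HD).
  - exact part2.
Qed.
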